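(* For every strict partition $\lambda$, as formal power series, $$K_\lambda(x_1,x_2,\ldots)=(-1)^{|\lambda|}\, GP_\lambda\!\left(\frac{-x_1}{1-x_1},\frac{-x_2}{1-x_2},\ldots\right).$$
   Context: A strict partition $\lambda=(\lambda_1>\dots>\lambda_\ell>0)$ has shifted shape consisting of the boxes $(i,j)$ with $1\le i\le\ell$, $i\le j\le i+\lambda_i-1$; $|\lambda|=\sum\lambda_i$; boxes $(i,i)$ form the main diagonal. Order $1'<1<2'<2<\cdots$. A weak set-valued shifted tableau of shape $\lambda$ is a filling of the shifted shape with finite nonempty multisets of primed and unprimed positive integers such that: (1) the smallest element in each box is $\ge$ the largest element in the box directly to its left; (2) the smallest element in each box is $\ge$ the largest element in the box directly above it; (3) no primed entries on the main diagonal; (4) each unprimed integer appears in at most one box of each column; (5) each primed integer appears in at most one box of each row. A set-valued shifted tableau is the same but with finite nonempty sets instead of multisets. For either kind, $x^T=\prod_i x_i^{a_i}$ with $a_i$ the number of occurrences of $i$ and $i'$ in $T$, and $|T|$ is the total degree of $x^T$. $K_\lambda=\sum_T x^T$ over weak set-valued shifted tableaux of shape $\lambda$; $GP_\lambda=\sum_T(-1)^{|T|-|\lambda|}x^T$ over set-valued shifted tableaux of shape $\lambda$. *)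

(* Defs.v *)
From HB Require Import structures.
From mathcomp Require Import all_boot all_order all_algebra.
Set Implicit Arguments. Unset Strict Implicit. Unset Printing Implicit Defensive.
Import Order.TTheory GRing.Theory Num.Theory.

Definition strict_partition (la : seq nat) : bool :=
  sorted gtn la && all (fun k => 0 < k) la.

(* Shifted shape, 0-indexed: row r (0 <= r < l), columns r <= c <= r + la_r - 1.
   (Paper's box (i,j) is (r,c) = (i-1,j-1); main diagonal is r = c.) *)
Definition in_shape (la : seq nat) (r c : nat) : bool :=
  [&& r < size la, r <= c & c < r + nth 0 la r].

(* All boxes of the shape fit in 'I_N * 'I_N. *)
Definition shN (la : seq nat) : nat := size la + sumn la.

(* Letters: (i, p) with i : 'I_n standing for the integer i+1 and p = primed.
   Total order 1' < 1 < 2' < 2 < ... encoded by the key 2(i+1) - p. *)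
Definition letter (n : nat) := ('I_n * bool)%type.
Definition key n (x : letter n) : nat := (2 * (x.1 + 1) - x.2)%N.

(* A filling assigns to each box a finite multiset of letters, encoded by its
   multiplicity function; multiplicities are bounded by B (harmless). *)
Definition filling (n N B : nat) :=
  {ffun ('I_N * 'I_N) -> {ffun letter n -> 'I_B.+1}}.

Definition occ n N B (F : filling n N B) b (x : letter n) : bool := (0 < F b x)%N.

Definition is_wsvt (la : seq nat) n B (F : filling n (shN la) B) : bool :=
  let bx := ('I_(shN la) * 'I_(shN la))%type in
  [forall b : bx, ~~ in_shape la b.1 b.2 ==> [forall x, F b x == ord0]] &&
  [forall b : bx, in_shape la b.1 b.2 ==> [exists x, occ F b x]] &&
  (* (1),(2): min of a box >= max of the box to its left / directly above *)
  [forall b : bx, [forall b' : bx, [forall x : letter n, [forall y : letter n,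
     [&& in_shape la b.1 b.2, in_shape la b'.1 b'.2, occ F b x, occ F b' y &
        ((b'.1 == b.1 :> nat) && (b'.2.+1 == b.2 :> nat))
        || ((b'.2 == b.2 :> nat) && (b'.1.+1 == b.1 :> nat))]
     ==> (key y <= key x)%N]]]] &&
  [forall b : bx, [forall i : 'I_n, (b.1 == b.2 :> nat) ==> ~~ occ F b (i, true)]] &&
  [forall c : 'I_(shN la), [forall i : 'I_n,
     #|[pred b : 'I_(shN la) * 'I_(shN la) | (b.2 == c) && occ F b (i, false)]| <= 1]] &&
  [forall r : 'I_(shN la), [forall i : 'I_n,
     #|[pred b : 'I_(shN la) * 'I_(shN la) | (b.1 == r) && occ F b (i, true)]| <= 1]].

Definition is_svt (la : seq nat) n B (F : filling n (shN la) B) : bool :=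
  is_wsvt F && [forall b : 'I_(shN la) * 'I_(shN la), [forall x : letter n, (F b x <= 1)%N]].

Definition content n N B (F : filling n N B) (i : 'I_n) : nat :=
  (\sum_(b : 'I_N * 'I_N) (F b (i, false) + F b (i, true)))%N.

(* Coefficient of x_1^{m_1} ... x_n^{m_n} in K_la(x_1, x_2, ...):
   the number of weak set-valued shifted tableaux T with x^T = x^m. *)
Definition Kcoef (la : seq nat) n (m : 'I_n -> nat) : nat :=
  #|[pred F : filling n (shN la) (\sum_i m i) |
       is_wsvt F && [forall i, content F i == m i]]|.

(* Coefficient of x^a in GP_la(x_1, x_2, ...):
   sum over set-valued shifted tableaux T with x^T = x^a of (-1)^(|T|-|la|);
   (-1)^(|T|-|la|) = (-1)^(|T|+|la|). *)
Definition GPcoef (la : seq nat) n (a : 'I_n -> nat) : int :=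
  ((-1) ^+ (\sum_i a i + sumn la)%N *
   (#|[pred F : filling n (shN la) 1 |
        is_svt F && [forall i, content F i == a i]]|)%:Z)%R.

(* Coefficients of the univariate series g(x) = -x/(1-x) = - sum_{j>=1} x^j. *)
Definition gcoef (j : nat) : int := if j == 0%N then 0%R else (-1)%R.

Definition powcoef (a k : nat) : int :=
  ((\poly_(j < k.+1) gcoef j) ^+ a)`_k.

(* Coefficient of x^m in F(g(x_1), g(x_2), ...) where F has coefficients Fc:
   sum over exponent vectors a of Fc(a) * prod_i [x_i^{m_i}] g(x_i)^{a_i}.
   Since g has zero constant term, only a with a_i <= m_i (and a_j = 0 for
   variables not occurring in x^m) contribute; we sum over a_i <= |m|. *)
Definition subst_coef n (Fc : ('I_n -> nat) -> int) (m : 'I_n -> nat) : int :=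
  (\sum_(a : {ffun 'I_n -> 'I_(\sum_i m i).+1})
      Fc (fun i => nat_of_ord (a i)) * \prod_(i < n) powcoef (a i) (m i))%R.

(* Main.v *)
Require Import Defs.
From HB Require Import structures.
From mathcomp Require Import all_boot all_order all_algebra.
From mathcomp Require Import zify ring.
From Stdlib Require Import FunctionalExtensionality.
Import Order.TTheory GRing.Theory Num.Theory.
Set Implicit Arguments. Unset Strict Implicit. Unset Printing Implicit Defensive.

Section Poly.
Local Open Scope ring_scope.

Definition Gp (M : nat) : {poly int} := \sum_(j < M.+1 | (0 < j)%N) 'X^j.

Lemma coef_Gp M i : (Gp M)`_i = ((0 < i) && (i <= M))%N%:R.
Proof.
rewrite /Gp coef_sum (bigID (fun j : 'I_M.+1 => j == i :> nat)) /=.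
rewrite [X in _ + X]big1 ?addr0; last first.
  by move=> j /andP[_ /negbTE]; rewrite coefXn eq_sym => ->.
rewrite (big_ord1_cond_eq _ (fun j => 'X^j`_i)) coefXn eqxx.
by rewrite ltnS andbC; case: ifP.
Qed.

Lemma lowcoef (p q : {poly int}) k :
  (forall i, (i <= k)%N -> p`_i = 0) -> (p * q)`_k = 0.
Proof.
move=> H; rewrite coefM big1 // => j _; rewrite H ?mul0r //; rewrite -ltnS; exact: ltn_ord.
Qed.

Lemma pow_low (p : {poly int}) a i : p`_0 = 0 -> (i < a)%N -> (p ^+ a)`_i = 0.
Proof.
move=> p0; elim: a i => [//|a IH] i lt; rewrite exprS coefM big1 // => j _.
have := ltn_ord j; case: (nat_of_ord j) => [_|j' hj]; first by rewrite p0 mul0r.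
rewrite IH ?mulr0 //; lia.
Qed.

Lemma Gp_trunc M k a : (k <= M)%N -> ((Gp M)^+a)`_k = ((Gp k)^+a)`_k.
Proof.
move=> kM; apply/eqP; rewrite -subr_eq0 -coefB subrXX; apply/eqP/lowcoef => i ik.
rewrite coefB !coef_Gp.
have -> : (i <= M)%N by exact: leq_trans ik kM.
by rewrite ik subrr.
Qed.

Lemma powcoefE a k : powcoef a k = (-1) ^+ a * ((Gp k)^+a)`_k.
Proof.
rewrite /powcoef.
have -> : \poly_(j < k.+1) gcoef j = - Gp k.
  apply/polyP => i; rewrite coef_poly coefN coef_Gp /gcoef ltnS.
  by case: i => [|i] //=; case: (i.+1 <= k)%N.
rewrite (exprNn (Gp k)) -[in LHS]signr_odd -[in RHS]signr_odd; case: (odd a) => /=.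
  by rewrite !expr1 !mulN1r coefN.
by rewrite !expr0 !mul1r.
Qed.

Lemma single (Q : finType) (A : pred Q) M k :
  \sum_(g : {ffun Q -> 'I_M.+1})
     (([forall q, (0 < g q)%N == (q \in A)] && (\sum_q (g q : nat) == k)%N)%:R : int)
  = ((Gp M)^+ #|A|)`_k.
Proof.
pose h q (j : 'I_M.+1) : {poly int} := if (0 < j)%N == (q \in A) then 'X^j else 0.
transitivity ((\sum_(g : {ffun Q -> 'I_M.+1}) \prod_q h q (g q))`_k).
  rewrite coef_sum; apply eq_bigr => g _.
  have [H|H] := boolP [forall q, (0 < g q)%N == (q \in A)] => /=.
    rewrite (eq_bigr (fun q => 'X^(g q))); last by move=> q _; rewrite /h (forallP H q).
    rewrite -(big_morph _ (exprD _) (expr0 _)) coefXn eq_sym.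
    by case: eqP.
  have [q Hq] : exists q, ~~ ((0 < g q)%N == (q \in A)).
    by apply/existsP; rewrite -negb_forall.
  by rewrite (bigD1 q) //= /h (negbTE Hq) mul0r coef0.
rewrite -prodr_const [in RHS]big_mkcond /=.
rewrite (eq_bigr (fun q => \sum_(j < M.+1) h q j)); last first.
  move=> q _; rewrite /h; case: (q \in A).
    by rewrite /Gp [in LHS]big_mkcond /=; apply: eq_bigr => j _; case: (0 < j)%N.
  by rewrite big_ord_recl /= big1 ?addr0.
by rewrite bigA_distr_bigA.
Qed.

End Poly.

Definition wsvt_of (la : seq nat) n
   (o : ('I_(shN la) * 'I_(shN la)) -> letter n -> bool) : bool :=
  let bx := ('I_(shN la) * 'I_(shN la))%type in
  [forall b : bx, ~~ in_shape la b.1 b.2 ==> [forall x, ~~ o b x]] &&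
  [forall b : bx, in_shape la b.1 b.2 ==> [exists x, o b x]] &&
  [forall b : bx, [forall b' : bx, [forall x : letter n, [forall y : letter n,
     [&& in_shape la b.1 b.2, in_shape la b'.1 b'.2, o b x, o b' y &
        ((b'.1 == b.1 :> nat) && (b'.2.+1 == b.2 :> nat))
        || ((b'.2 == b.2 :> nat) && (b'.1.+1 == b.1 :> nat))]
     ==> (key y <= key x)%N]]]] &&
  [forall b : bx, [forall i : 'I_n, (b.1 == b.2 :> nat) ==> ~~ o b (i, true)]] &&
  [forall c : 'I_(shN la), [forall i : 'I_n,
     #|[pred b : 'I_(shN la) * 'I_(shN la) | (b.2 == c) && o b (i, false)]| <= 1]] &&
  [forall r : 'I_(shN la), [forall i : 'I_n,
     #|[pred b : 'I_(shN la) * 'I_(shN la) | (b.1 == r) && o b (i, true)]| <= 1]].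

Lemma is_wsvtE la n B (F : filling n (shN la) B) : is_wsvt F = wsvt_of (occ F).
Proof.
have E : forall b x, (F b x == ord0) = ~~ occ F b x.
  by move=> b x; rewrite /occ lt0n negbK.
rewrite /is_wsvt /wsvt_of.
by under eq_forallb => b do under eq_forallb => x do rewrite E.
Qed.

Lemma wsvt_occ la n B1 B2 (F1 : filling n (shN la) B1) (F2 : filling n (shN la) B2) :
  (forall b x, occ F1 b x = occ F2 b x) -> is_wsvt F1 = is_wsvt F2.
Proof.
move=> H; rewrite !is_wsvtE.
have -> : occ F1 = occ F2 by apply: functional_extensionality => b;
  apply: functional_extensionality => x; exact: H.
by [].
Qed.

Section Main.
Local Open Scope ring_scope.

Lemma cardZ (T : finType) (P : pred T) : (#|P|%:Z = \sum_(x : T) ((P x)%:R : int))%R.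
Proof.
rewrite -natz -sum1_card natr_sum big_mkcond; apply eq_bigr => x _.
by rewrite unfold_in; case: (P x).
Qed.

Lemma prod_bool (I : finType) (P : pred I) :
  \prod_i ((P i)%:R : int) = ([forall i, P i])%:R.
Proof.
have [H|H] := boolP [forall i, P i].
  by rewrite big1 // => i _; rewrite (forallP H).
have [i Hi] : exists i, ~~ P i by apply/existsP; rewrite -negb_forall.
by rewrite (bigD1 i) //= (negbTE Hi) mul0r.
Qed.

Variables (la : seq nat) (n : nat) (m : 'I_n -> nat).
Local Notation N := (shN la).
Local Notation M := (\sum_(i < n) m i)%N.
Local Notation bx := ('I_N * 'I_N)%type.

Definition piF (F : filling n N M) : filling n N 1 :=
  [ffun b => [ffun x => inord (occ F b x)]].

Lemma occ_piF F b x : occ (piF F) b x = occ F b x.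
Proof. rewrite {1}/occ !ffunE inordK; case: (occ F b x) => //. Qed.

Lemma S_val (S : filling n N 1) b x : (S b x : nat) = occ S b x.
Proof. by rewrite /occ; case: (S b x) => [[|[|]]]. Qed.

Lemma piF_eq F S : (piF F == S) = [forall b, forall x, occ F b x == occ S b x].
Proof.
apply/eqP/forallP.
  by move=> <- b; apply/forallP => x; rewrite occ_piF.
move=> H; apply/ffunP => b; apply/ffunP => x; rewrite !ffunE; apply: val_inj.
rewrite /= S_val inordK; last by case: (occ F b x).
by move/forallP: (H b) => /(_ x) /eqP ->.
Qed.

Lemma svt_wsvt (S : filling n N 1) : is_svt S = is_wsvt S.
Proof.
rewrite /is_svt; have -> : [forall b, [forall x, (S b x <= 1)%N]] = true.
  by apply/forallP => b; apply/forallP => x; rewrite -ltnS ltn_ord.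
by rewrite andbT.
Qed.

Definition fiber (S : filling n N 1) : int :=
  \sum_(F : filling n N M) ((piF F == S) && [forall i, content F i == m i])%:R.

Lemma K_eq : (Kcoef la m)%:Z = \sum_(S : filling n N 1) (is_svt S)%:R * fiber S.
Proof.
rewrite /Kcoef cardZ.
under [RHS]eq_bigr do rewrite /fiber big_distrr.
rewrite exchange_big /=; apply: eq_bigr => F _.
rewrite (bigD1 (piF F)) //= [X in _ + X]big1 ?addr0.
  rewrite eqxx svt_wsvt -natrM mulnb; congr (_%:R).
  by rewrite (@wsvt_occ _ _ _ _ (piF F) F) // => b x; rewrite occ_piF.
by move=> S /negbTE nS; rewrite eq_sym nS mulr0.
Qed.


Definition PsiG (G : {ffun 'I_n -> {ffun (bx * bool) -> 'I_M.+1}}) : filling n N M :=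
  [ffun b => [ffun x => G x.1 (b, x.2)]].
Definition PhiF (F : filling n N M) : {ffun 'I_n -> {ffun (bx * bool) -> 'I_M.+1}} :=
  [ffun i => [ffun q => F q.1 (i, q.2)]].

Definition Aset (S : filling n N 1) (i : 'I_n) : pred (bx * bool) :=
  [pred q | occ S q.1 (i, q.2)].

Lemma content_card (S : filling n N 1) i : content S i = #|Aset S i|.
Proof.
rewrite /content -sum1_card [in RHS]big_mkcond /=.
transitivity (\sum_b \sum_(s : bool) (if (b, s) \in Aset S i then 1 else 0))%N.
  apply: eq_bigr => b _; rewrite big_bool /= !inE /= !S_val addnC.
  by case: (occ S b (i, true)); case: (occ S b (i, false)).
by rewrite pair_bigA; apply eq_bigr => -[b s] _.
Qed.

Lemma content_Psi G i : content (PsiG G) i = (\sum_q (G i q : nat))%N.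
Proof.
rewrite /content.
transitivity (\sum_b \sum_(s : bool) (G i (b, s) : nat))%N.
  by apply: eq_bigr => b _; rewrite big_bool /= !ffunE /= addnC.
by rewrite pair_bigA; apply eq_bigr => -[b s] _.
Qed.

Lemma fiberE S : fiber S = \prod_(i < n) ((Gp M)^+ (content S i))`_(m i).
Proof.
rewrite /fiber (reindex PsiG); last first.
  by exists PhiF => [G _|F _]; apply/ffunP => i; apply/ffunP => -[x y]; rewrite !ffunE.
transitivity (\prod_(i < n) \sum_(g : {ffun (bx * bool) -> 'I_M.+1})
     (([forall q, (0 < g q)%N == (q \in Aset S i)] && (\sum_q (g q : nat) == m i)%N)%:R : int)); last first.
  by apply eq_bigr => i _; rewrite content_card single.
rewrite bigA_distr_bigA; apply eq_bigr => G _.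
rewrite prod_bool; congr ((nat_of_bool _)%:R).
rewrite piF_eq; apply/idP/idP.
  case/andP=> /forallP H1 /forallP H2; apply/forallP => i; apply/andP; split; last by rewrite -content_Psi; exact: H2 i.
  apply/forallP => -[b s]; move/forallP: (H1 b) => /(_ (i, s)).
  by rewrite /occ !ffunE !inE /=.
move/forallP=> H; apply/andP; split.
  apply/forallP => b; apply/forallP => -[i s].
  have /andP[/forallP /(_ (b, s)) + _] := H i.
  by rewrite /occ !ffunE !inE /=.
by apply/forallP => i; have /andP[_] := H i; rewrite content_Psi.
Qed.

Lemma leq_m i : (m i <= M)%N.
Proof. by rewrite (bigD1 i) //= leq_addr. Qed.

Lemma sq_sign k : (-1) ^+ k * (-1) ^+ k = 1 :> int.
Proof. by rewrite -exprD addnn -mul2n exprM sqrrN expr1n. Qed.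

Lemma RHS_eq : (-1) ^+ sumn la * subst_coef (@GPcoef la n) m =
  \sum_(S : filling n N 1) (is_svt S)%:R * \prod_(i < n) ((Gp M)^+ (content S i))`_(m i).
Proof.
rewrite /subst_coef big_distrr /=.
transitivity (\sum_(a : {ffun 'I_n -> 'I_M.+1}) \sum_(S : filling n N 1)
   ((is_svt S && [forall i, content S i == a i])%:R * \prod_i ((Gp M)^+ (a i))`_(m i))).
  apply eq_bigr => a _.
  have HP : \prod_i powcoef (a i) (m i) =
      (-1) ^+ (\sum_i (a i : nat))%N * \prod_i ((Gp M)^+ (a i))`_(m i).
    rewrite (eq_bigr (fun i => (-1) ^+ (a i) * ((Gp M)^+ (a i))`_(m i))); last first.
      by move=> i _; rewrite powcoefE Gp_trunc // leq_m.
    by rewrite big_split /= (big_morph (fun k => (-1) ^+ k : int) (exprD (-1)) (expr0 (-1))).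
  rewrite HP /GPcoef.
  set C := (#|_|%:Z); set H := \prod_i _.
  rewrite exprD.
  transitivity (C * H * (((-1) ^+ (\sum_i (a i : nat))%N * (-1) ^+ (\sum_i (a i : nat))%N) *
                 ((-1) ^+ sumn la * (-1) ^+ sumn la))); first by ring.
  rewrite !sq_sign !mulr1 /C cardZ big_distrl /=.
  by apply eq_bigr.
rewrite exchange_big /=; apply eq_bigr => S _.
under eq_bigr do rewrite -mulnb natrM -mulrA.
rewrite -big_distrr /=; congr (_ * _).
have [Hle|Hgt] := boolP [forall i, content S i <= M]%N.
  rewrite (bigD1 [ffun i => inord (content S i)]) //= [X in _ + X]big1 ?addr0.
    have -> : [forall i, content S i == ([ffun i => inord (content S i)] : {ffun 'I_n -> 'I_M.+1}) i] = true.
      by apply/forallP => i; rewrite ffunE inordK // ltnS (forallP Hle i).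
    by rewrite mul1r; apply eq_bigr => i _; rewrite ffunE inordK // ltnS (forallP Hle i).
  move=> a ne; have -> : [forall i, content S i == a i] = false; last by rewrite mul0r.
  apply/negbTE; apply: contra ne => /forallP H; apply/eqP/ffunP => i; apply: val_inj.
  by rewrite ffunE /= (eqP (H i)) inordK.
have [i0 Hi0] : exists i, ~~ (content S i <= M)%N by apply/existsP; rewrite -negb_forall.
rewrite big1; last first.
  move=> a _; have -> : [forall i, content S i == a i] = false; last by rewrite mul0r.
  apply/negbTE/negP => /forallP /(_ i0) /eqP E; move: Hi0; by rewrite E leq_ord.
rewrite (bigD1 i0) //= pow_low ?mul0r //; first by rewrite coef_Gp.
rewrite -ltnNge in Hi0; exact: leq_ltn_trans (leq_m i0) Hi0.
Qed.

End Main.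

Theorem proposition3 (la : seq nat) (hla : strict_partition la)
    (n : nat) (m : 'I_n -> nat) :
  ((Kcoef la m)%:Z = (-1) ^+ sumn la * subst_coef (@GPcoef la n) m)%R.
Proof.
rewrite K_eq RHS_eq; apply eq_bigr => S _; by rewrite fiberE.
Qed.
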